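(* Let $n_\text{in}, n_\text{out} \ge 1$, let $\mathbf{W}\in\mathbb{R}^{n_\text{out}\times n_\text{in}}$, $\mathbf{b}\in\mathbb{R}^{n_\text{out}}$, $\mathbf{c}\in\mathbb{R}^{n_\text{in}}$, and let $\mathbf{U}=[\mathbf{u}_1\,\mathbf{u}_2\,\ldots\,\mathbf{u}_{n_\text{in}}]\in\mathbb{R}^{n_\text{in}\times n_\text{in}}$. Consider the input parallelotope $\mathcal{P}(\mathbf{U})=\{\mathbf{c}+\sum_{j=1}^{n_\text{in}}\lambda_j\mathbf{u}_j:\lambda\in[0,1]^{n_\text{in}}\}$ and its pre-activation image $\mathcal{P}(\mathbf{V})=\{\mathbf{W}\mathbf{x}+\mathbf{b}:\mathbf{x}\in\mathcal{P}(\mathbf{U})\}$, where $\mathbf{V}=\mathbf{W}\mathbf{U}=[\mathbf{v}_1\,\ldots\,\mathbf{v}_{n_\text{in}}]$. Fix $r\in[0,1]$ and split $\mathcal{P}(\mathbf{U})$ along $\mathbf{u}_1$ into the ``left'' parallelotope $\mathcal{P}(\mathbf{U}^L)=\{\mathbf{c}+\lambda_1 r\mathbf{u}_1+\sum_{j\ge2}\lambda_j\mathbf{u}_j:\lambda\in[0,1]^{n_\text{in}}\}$ and the ``right'' parallelotope $\mathcal{P}(\mathbf{U}^R)=\{\mathbf{c}+r\mathbf{u}_1+\lambda_1(1-r)\mathbf{u}_1+\sum_{j\ge2}\lambda_j\mathbf{u}_j:\lambda\in[0,1]^{n_\text{in}}\}$, and let $\mathcal{P}(\mathbf{V}^L),\mathcal{P}(\mathbf{V}^R)$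 be their images under $\mathbf{x}\mapsto\mathbf{W}\mathbf{x}+\mathbf{b}$ (so $\mathbf{V}^L=\mathbf{W}\mathbf{U}^L$, $\mathbf{V}^R=\mathbf{W}\mathbf{U}^R$). Write $v_{j,i}$ for the $i$-th coordinate of $\mathbf{v}_j$ and $z_i=\sum_{j=2}^{n_\text{in}}|v_{j,i}|$. Then \[ V_\text{red}:=\mathrm{Vol}(\mathcal{B}(\mathbf{V}))-\mathrm{Vol}\big(\mathcal{B}(\mathbf{V}^L)\cup\mathcal{B}(\mathbf{V}^R)\big) =\sum_{k=2}^{n_\text{out}}\big(1-r^k-(1-r)^k\big)\sum_{C_i\in P_k(C)}\Big[\prod_{j\in C_i}|v_{1,j}|\Big]\prod_{t\in C\setminus C_i}z_t , \] where $C=\{1,\ldots,n_\text{out}\}$ and $P_k(C)$ is the set of subsets of $C$ with exactly $k$ elements.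
   Context: For a parallelotope $\mathcal{P}\subset\mathbb{R}^{n_\text{out}}$ (such as $\mathcal{P}(\mathbf{V})$), $\mathcal{B}(\cdot)$ denotes the smallest axis-aligned hyperrectangle containing it, i.e., the Cartesian product over coordinates $i$ of the interval between the minimal and maximal $i$-th coordinate of its vertices; $\mathrm{Vol}$ denotes $n_\text{out}$-dimensional Lebesgue volume. In particular $\mathrm{Vol}(\mathcal{B}(\mathbf{V}))=\prod_{i=1}^{n_\text{out}}\sum_{j=1}^{n_\text{in}}|v_{j,i}|$. *)

(* Defs.v *)
From HB Require Import structures.
From mathcomp Require Import all_boot all_order all_algebra.
From mathcomp Require Import all_classical all_reals.
From mathcomp Require Import ereal measure lebesgue_measure lebesgue_integral.
Set Implicit Arguments. Unset Strict Implicit. Unset Printing Implicit Defensive.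
Import Order.TTheory GRing.Theory Num.Theory.
Local Open Scope classical_set_scope.
Local Open Scope ring_scope.

Section Defs.
Variable R : realType.

Definition parallelotope (m k : nat) (c : 'cV[R]_m) (G : 'M[R]_(m, k)) : set 'cV[R]_m :=
  [set c + G *m lam | lam in [set lam : 'cV[R]_k | forall j, 0 <= lam j 0 <= 1]].

Definition affine_image (m n : nat) (W : 'M[R]_(n, m)) (b : 'cV[R]_n)
    (S : set 'cV[R]_m) : set 'cV[R]_n :=
  [set W *m x + b | x in S].

Definition bbox (n : nat) (S : set 'cV[R]_n) : set 'cV[R]_n :=
  [set x | forall i, inf [set y i 0 | y in S] <= x i 0 <= sup [set y i 0 | y in S]].

(* n-dimensional Lebesgue volume, as the iterated Lebesgue integral
   (Tonelli) of the slices: vol_0 S = 1 if S is nonempty, and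
   vol_(n+1) S = \int_R vol_n {y | (x;y) \in S} dx. *)
Fixpoint vol (n : nat) : set 'cV[R]_n -> \bar R :=
  match n with
  | 0 => fun S => if `[< S 0 >] then 1%E else 0%E
  | n'.+1 => fun S =>
      (\int[@lebesgue_measure R]_(x in setT)
         vol [set y : 'cV[R]_n' | S (col_mx (x%:M : 'cV[R]_1) y)])%E
  end.

End Defs.

(* Main.v *)
Require Import Defs.
From HB Require Import structures.
From mathcomp Require Import all_boot all_order all_algebra.
From mathcomp Require Import all_classical all_reals.
From mathcomp Require Import ereal measure lebesgue_measure lebesgue_integral.
From mathcomp Require Import numfun.
From mathcomp Require Import ring lra.
Import Order.TTheory GRing.Theory Num.Theory.
Local Open Scope classical_set_scope.
Local Open Scope ring_scope.

Section C.
Variable R : comRingType.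

Definition Sk n (a z : 'I_n -> R) (k : nat) :=
  \sum_(C : {set 'I_n} | #|C| == k) (\prod_(j in C) a j) * \prod_(t in ~: C) z t.

Arguments Sk {n}.

Lemma expand n (a z : 'I_n -> R) (x : R) :
  \prod_(i < n) (x * a i + z i) = \sum_(0 <= k < n.+1) x ^+ k * Sk a z k.
Proof.
rewrite bigA_distr.
rewrite big_mkord.
transitivity (\sum_(C : {set 'I_n}) x ^+ #|C| * ((\prod_(j in C) a j) * \prod_(t in ~: C) z t)).
  apply: eq_bigr => C _.
  rewrite (bigID (fun i => i \in C)) /=.
  rewrite mulrA; congr (_ * _).
    rewrite -prodr_const -big_split /=.
    by apply: eq_bigr => i ->.
  by apply: eq_big => [i|i /negbTE Hi]; rewrite ?inE ?Hi.
rewrite /Sk.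
under [RHS]eq_bigr do rewrite big_distrr /=.
rewrite (exchange_big_dep xpredT) //=.
apply: eq_bigr => C _.
have hC : (#|C| < n.+1)%N by rewrite ltnS -[X in (_ <= X)%N](card_ord n) max_card.
rewrite (big_pred1 (Ordinal hC)) //.
Qed.

Lemma final n (hn : (0 < n)%N) (a z : 'I_n -> R) (r : R) :
  \prod_(i < n) (a i + z i) - (\prod_(i < n) (r * a i + z i)
    + \prod_(i < n) ((1 - r) * a i + z i) - \prod_(i < n) z i)
  = \sum_(2 <= k < n.+1) (1 - r ^+ k - (1 - r) ^+ k) * Sk a z k.
Proof.
have e1 : \prod_(i < n) (a i + z i) = \prod_(i < n) (1 * a i + z i).
  by apply: eq_bigr => i _; rewrite mul1r.
have e0 : \prod_(i < n) z i = \prod_(i < n) (0 * a i + z i).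
  by apply: eq_bigr => i _; rewrite mul0r add0r.
rewrite e1 e0 !expand -big_split /= -!sumrB.
rewrite [LHS]big_ltn // [X in _ + X = _]big_ltn ?ltnS //.
rewrite !expr0 !expr1.
rewrite [X in _ = X](_ : _ = \sum_(2 <= k < n.+1)
   (1 ^+ k * Sk a z k - (r ^+ k * Sk a z k + (1 - r) ^+ k * Sk a z k
      - 0 ^+ k * Sk a z k))).
  ring.
apply: eq_big_nat => k /andP[hk _].
rewrite expr0n expr1n.
have -> : (k == 0%N) = false by case: k hk.
rewrite /= mulr0n; ring.
Qed.

End C.

Section S.
Variable R : realType.

Definition inbox n (lo hi : 'I_n -> R) (y : 'cV[R]_n) : Prop :=
  forall i, lo i <= y i 0 <= hi i.
Arguments inbox {n}.
Definition pw n (lo hi : 'I_n -> R) := \prod_(i < n) Num.max 0 (hi i - lo i).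

Arguments pw {n}.

Lemma slice n (lo hi : 'I_n.+1 -> R) (x : R) (y : 'cV[R]_n) :
  inbox lo hi (col_mx (x%:M : 'cV[R]_1) y) <->
  (lo ord0 <= x <= hi ord0) /\
  inbox (fun i => lo (lift ord0 i)) (fun i => hi (lift ord0 i)) y.
Proof.
have E0 : (ord0 : 'I_n.+1) = lshift n (ord0 : 'I_1) by apply: val_inj.
have E1 : forall i : 'I_n, (lift ord0 i : 'I_n.+1) = rshift 1 i by move=> i; apply: val_inj.
have C0 : col_mx (x%:M : 'cV[R]_1) y ord0 0 = x.
  by rewrite E0 col_mxEu mxE eqxx mulr1n.
have C1 : forall i, col_mx (x%:M : 'cV[R]_1) y (lift ord0 i) 0 = y i 0.
  by move=> i; rewrite E1 col_mxEd.
split.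
  move=> H; split; first by rewrite -C0; exact: H.
  by move=> i; rewrite -C1; exact: H.
case=> H0 H1 [[|k] hk].
  have -> : Ordinal hk = ord0 by apply: val_inj.
  by rewrite C0.
have hk' : (k < n)%N by [].
have -> : Ordinal hk = lift ord0 (Ordinal hk') by apply: val_inj.
by rewrite C1; exact: H1.
Qed.

Arguments slice {n}.

Lemma int_itv (a b c : R) :
  (\int[@lebesgue_measure R]_(x in setT) (c * \1_(`[a, b]%classic) x)%:E =
   (c * Num.max 0 (b - a))%:E)%E.
Proof.
under eq_integral do rewrite EFinM.
rewrite integralZl //; last exact: (@integrable_indic_itv R a b true false).
rewrite integral_indic // setIT.
have := @lebesgue_measure_itv R `[a, b]%R. rewrite /= => ->.
rewrite lte_fin.
case: leP => ab.
  by rewrite mule0 max_l ?mulr0 // subr_le0.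
by rewrite -EFinD -EFinM max_r // subr_ge0 ltW.
Qed.

Lemma int_ok (a b c : R) :
  (@lebesgue_measure R).-integrable setT (EFin \o (fun x => c * \1_(`[a, b]%classic) x)).
Proof.
have -> : (EFin \o (fun x => c * \1_(`[a, b]%classic) x)) =
   (fun x => c%:E * (EFin \o \1_(`[a, b]%classic)) x)%E.
  by apply/funext => x /=; rewrite EFinM.
apply: integrableZl => //; exact: (@integrable_indic_itv R a b true false).
Qed.

Lemma ind_itv (a b x : R) : \1_(`[a, b]%classic) x = ((a <= x <= b)%R)%:R :> R.
Proof. by rewrite indicE mem_setE in_itv. Qed.


Definition mx2 n (f g : 'I_n -> R) := fun i => Num.max (f i) (g i).
Definition mn2 n (f g : 'I_n -> R) := fun i => Num.min (f i) (g i).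
Arguments mx2 {n}. Arguments mn2 {n}.

Lemma bR (a b : bool) : ((a && b)%:R : R) = a%:R * b%:R.
Proof. by case: a; case: b => /=; rewrite ?mul1r ?mul0r. Qed.

Lemma boxU n (e1 e2 : bool) (lo1 hi1 lo2 hi2 : 'I_n -> R) :
  vol [set y | (e1 /\ inbox lo1 hi1 y) \/ (e2 /\ inbox lo2 hi2 y)] =
  (e1%:R * pw lo1 hi1 + e2%:R * pw lo2 hi2
   - (e1 && e2)%:R * pw (mx2 lo1 lo2) (mn2 hi1 hi2))%:E.
Proof.
elim: n e1 e2 lo1 hi1 lo2 hi2 => [|n IH] e1 e2 lo1 hi1 lo2 hi2.
  rewrite /= /pw !big_ord0 !mulr1.
  have I : forall lo hi (y : 'cV[R]_0), inbox lo hi y by move=> ? ? ? [].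
  case: e1; case: e2 => /=.
  - by rewrite asboolT; [congr (_%:E); ring | left; split => //; exact: I].
  - by rewrite asboolT; [congr (_%:E); ring | left; split => //; exact: I].
  - by rewrite asboolT; [congr (_%:E); ring | right; split => //; exact: I].
  - by rewrite asboolF; [congr (_%:E); ring | case; case].
rewrite /=.
pose L1 := fun i : 'I_n => lo1 (lift ord0 i).
pose H1 := fun i : 'I_n => hi1 (lift ord0 i).
pose L2 := fun i : 'I_n => lo2 (lift ord0 i).
pose H2 := fun i : 'I_n => hi2 (lift ord0 i).
pose c1 := e1%:R * pw L1 H1.
pose c2 := e2%:R * pw L2 H2.
pose c3 := (e1 && e2)%:R * pw (mx2 L1 L2) (mn2 H1 H2).
pose A := Num.max (lo1 ord0) (lo2 ord0).
pose B := Num.min (hi1 ord0) (hi2 ord0).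
pose f1 := fun x => c1 * \1_(`[lo1 ord0, hi1 ord0]%classic) x.
pose f2 := fun x => c2 * \1_(`[lo2 ord0, hi2 ord0]%classic) x.
pose f3 := fun x => c3 * \1_(`[A, B]%classic) x.
transitivity (\int[@lebesgue_measure R]_(x in setT) ((f1 x + f2 x)%:E - (f3 x)%:E))%E.
  apply: eq_integral => x _.
  rewrite (_ : [set y | _] = [set y | ((e1 && (lo1 ord0 <= x <= hi1 ord0)) /\ inbox L1 H1 y)
       \/ ((e2 && (lo2 ord0 <= x <= hi2 ord0)) /\ inbox L2 H2 y)]); last first.
    apply/funext => y /=; apply/propext.
    move: (slice lo1 hi1 x y) (slice lo2 hi2 x y) => S1 S2.
    split.
    - case=> -[h1 h2]; [left; move/S1: h2 | right; move/S2: h2] => -[hx hy];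
        by split => //; rewrite h1 hx.
    - case=> -[/andP[h1 hx] hy]; [left; split => //; apply/S1 | right; split => //; apply/S2];
        by split.
  rewrite IH -EFinB; congr (_%:E).
  rewrite /f1 /f2 /f3 !ind_itv.
  have -> : ((e1 && (lo1 ord0 <= x <= hi1 ord0)) && (e2 && (lo2 ord0 <= x <= hi2 ord0)))
      = (e1 && e2) && (A <= x <= B).
    rewrite /A /B ge_max le_min; clear f1 f2 f3 c1 c2 c3.
    by case: e1; case: e2; case: (lo1 ord0 <= x); case: (lo2 ord0 <= x);
       case: (x <= hi1 ord0); case: (x <= hi2 ord0).
  rewrite /c1 /c2 /c3 !bR; ring.
rewrite integralB_EFin //; last first.
  - exact: int_ok.
  - have -> : (EFin \o (fun x => f1 x + f2 x)) = ((EFin \o f1) \+ (EFin \o f2))%E.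
      by apply/funext => x /=; rewrite EFinD.
    by apply: integrableD => //; exact: int_ok.
under eq_integral do rewrite EFinD.
rewrite (integralD_EFin _ (int_ok _ _ _) (int_ok _ _ _)) //.
rewrite !int_itv -EFinD; congr (_%:E).
rewrite /pw !big_ord_recl /mx2 /mn2 -/A -/B /c1 /c2 /c3 /pw -!mulrA.
by congr (_ * _ + _ * _ - _ * _); rewrite mulrC.
Qed.

Lemma sup_att (S : set R) M : S M -> (forall y, S y -> y <= M) -> sup S = M.
Proof.
move=> SM ub; apply/le_anti/andP; split.
  by apply: ge_sup; [exists M | move=> y /ub].
by apply: (ub_le_sup _ SM); exists M => y /ub.
Qed.

Lemma inf_att (S : set R) M : S M -> (forall y, S y -> M <= y) -> inf S = M.
Proof.
move=> SM lb; apply/le_anti/andP; split.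
  by apply: (ge_inf _ SM); exists M => y /lb.
by apply: lb_le_inf; [exists M | move=> y /lb].
Qed.

Lemma cube_sup m (K : R) (d : 'I_m -> R) :
  sup [set K + \sum_(j < m) lam j 0 * d j
      | lam in [set lam : 'cV[R]_m | forall j, 0 <= lam j 0 <= 1]]
  = K + \sum_(j < m) Num.max 0 (d j).
Proof.
apply: sup_att.
  exists (\col_j (((0 < d j)%R)%:R : R)).
    by move=> j; rewrite mxE; case: ltP => _ /=; rewrite ?lexx ?ler01.
  congr (_ + _); apply: eq_bigr => j _; rewrite mxE.
  by case: ltP => h /=; rewrite ?mul1r ?mul0r.
move=> y [lam hl <-]; rewrite lerD2l; apply: ler_sum => j _.
have /andP[h0 h1] := hl j.
case: (leP 0 (d j)) => h.
  nra.
nra.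
Qed.

Lemma cube_inf m (K : R) (d : 'I_m -> R) :
  inf [set K + \sum_(j < m) lam j 0 * d j
      | lam in [set lam : 'cV[R]_m | forall j, 0 <= lam j 0 <= 1]]
  = K + \sum_(j < m) Num.min 0 (d j).
Proof.
apply: inf_att.
  exists (\col_j (((d j < 0)%R)%:R : R)).
    by move=> j; rewrite mxE; case: ltP => _ /=; rewrite ?lexx ?ler01.
  congr (_ + _); apply: eq_bigr => j _; rewrite mxE.
  by case: ltP => h /=; rewrite ?mul1r ?mul0r.
move=> y [lam hl <-]; rewrite lerD2l; apply: ler_sum => j _.
have /andP[h0 h1] := hl j.
case: (leP 0 (d j)) => h.
  nra.
nra.
Qed.


Lemma vol_box n (lo hi : 'I_n -> R) : vol [set y | inbox lo hi y] = (pw lo hi)%:E.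
Proof.
transitivity (vol [set y | (true /\ inbox lo hi y) \/ (false /\ inbox lo hi y)]).
  by congr vol; apply/funext => y; apply/propext; split; [left | case=> -[]].
by rewrite boxU /= mul1r !mul0r addr0 subr0.
Qed.

Lemma vol_box2 n (lo1 hi1 lo2 hi2 : 'I_n -> R) :
  vol ([set y | inbox lo1 hi1 y] `|` [set y | inbox lo2 hi2 y]) =
  (pw lo1 hi1 + pw lo2 hi2 - pw (mx2 lo1 lo2) (mn2 hi1 hi2))%:E.
Proof.
transitivity (vol [set y | (true /\ inbox lo1 hi1 y) \/ (true /\ inbox lo2 hi2 y)]).
  congr vol; apply/funext => y; apply/propext.
  by split; case=> h; [left | right | left; case: h | right; case: h].
by rewrite boxU /= !mul1r.
Qed.

Lemma maxmin (x : R) : Num.max 0 x - Num.min 0 x = `|x|.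
Proof. by case: (leP 0 x) => h; [rewrite subr0 ger0_norm | rewrite sub0r ltr0_norm]. Qed.

Lemma wlem m (K : R) (d : 'I_m -> R) :
  Num.max 0 ((K + \sum_(j < m) Num.max 0 (d j)) - (K + \sum_(j < m) Num.min 0 (d j)))
  = \sum_(j < m) `|d j|.
Proof.
rewrite opprD addrACA subrr add0r -sumrB.
under eq_bigr do rewrite maxmin.
by rewrite max_r // sumr_ge0.
Qed.

Lemma overlap (K s M m r : R) : 0 <= r -> r <= 1 -> m <= M ->
  Num.max 0 (Num.min (K + (Num.max 0 (r * s) + M))
                     (K + r * s + (Num.max 0 ((1 - r) * s) + M))
           - Num.max (K + (Num.min 0 (r * s) + m))
                     (K + r * s + (Num.min 0 ((1 - r) * s) + m))) = M - m.
Proof.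
move=> r0 r1 mM.
case: (leP 0 s) => hs.
  have -> : Num.max 0 (r * s) = r * s by apply: max_r; nra.
  have -> : Num.min 0 (r * s) = 0 by apply: min_l; nra.
  have -> : Num.max 0 ((1 - r) * s) = (1 - r) * s by apply: max_r; nra.
  have -> : Num.min 0 ((1 - r) * s) = 0 by apply: min_l; nra.
  rewrite min_l; last by nra.
  rewrite [X in _ - X]max_r; last by nra.
  rewrite max_r; last by nra.
  ring.
have -> : Num.max 0 (r * s) = 0 by apply: max_l; nra.
have -> : Num.min 0 (r * s) = r * s by apply: min_r; nra.
have -> : Num.max 0 ((1 - r) * s) = 0 by apply: max_l; nra.
have -> : Num.min 0 ((1 - r) * s) = (1 - r) * s by apply: min_r; nra.
rewrite min_r; last by nra.
rewrite [X in _ - X]max_l; last by nra.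
rewrite max_r; last by nra.
ring.
Qed.

End S.

Arguments inbox {R n}. Arguments pw {R n}. Arguments mx2 {R n}. Arguments mn2 {R n}.
Theorem lemma1 (R : realType) (nin nout : nat) (hin : (0 < nin)%N) (hout : (0 < nout)%N)
  (W : 'M[R]_(nout, nin)) (b : 'cV[R]_nout) (c : 'cV[R]_nin) (U : 'M[R]_nin)
  (r : R) (hr0 : 0 <= r) (hr1 : r <= 1) :
  let j1 : 'I_nin := Ordinal hin in
  let u1 : 'cV[R]_nin := col j1 U in
  let PU := parallelotope c U in
  let PUL := [set c + (lam j1 0 * r) *: u1
                 + \sum_(j < nin | j != j1) lam j 0 *: col j U
             | lam in [set lam : 'cV[R]_nin | forall j, 0 <= lam j 0 <= 1]] in
  let PUR := [set c + r *: u1 + (lam j1 0 * (1 - r)) *: u1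
                 + \sum_(j < nin | j != j1) lam j 0 *: col j U
             | lam in [set lam : 'cV[R]_nin | forall j, 0 <= lam j 0 <= 1]] in
  let PV := affine_image W b PU in
  let PVL := affine_image W b PUL in
  let PVR := affine_image W b PUR in
  let V := W *m U in
  let z (t : 'I_nout) := \sum_(j < nin | j != j1) `|V t j| in
  (vol (bbox PV) - vol (bbox PVL `|` bbox PVR))%E =
  (\sum_(2 <= k < nout.+1)
     (1 - r ^+ k - (1 - r) ^+ k) *
     \sum_(Ci : {set 'I_nout} | #|Ci| == k)
        (\prod_(j in Ci) `|V j j1|) * \prod_(t in ~: Ci) z t)%:E.
Proof.
move=> j1 u1 PU PUL PUR PV PVL PVR V z.
pose K i := (W *m c + b) i 0.
pose dL i (j : 'I_nin) := if j == j1 then r * V i j1 else V i j.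
pose dR i (j : 'I_nin) := if j == j1 then (1 - r) * V i j1 else V i j.
have colV : forall i j, (W *m col j U) i 0 = V i j.
  by move=> i j; rewrite !mxE; apply: eq_bigr => k _; rewrite mxE.
have cV : forall lam i, (W *m (c + U *m lam) + b) i 0 = K i + \sum_j lam j 0 * V i j.
  move=> lam i.
  have -> : W *m (c + U *m lam) + b = (W *m c + b) + V *m lam.
    by rewrite mulmxDr mulmxA addrAC.
  rewrite [LHS]mxE [X in _ + X]mxE; congr (_ + _).
  by apply: eq_bigr => j _; rewrite mulrC.
have entD : forall (A B : 'cV[R]_nout) i, (A + B) i 0 = A i 0 + B i 0.
  by move=> A B i; rewrite mxE.
have entZ : forall (a : R) (A : 'cV[R]_nout) i, (a *: A) i 0 = a * A i 0.
  by move=> a A i; rewrite mxE.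
have cL : forall (lam : 'cV[R]_nin) i,
  (W *m (c + (lam j1 0 * r) *: u1 + \sum_(j < nin | j != j1) lam j 0 *: col j U) + b) i 0
  = K i + \sum_j lam j 0 * dL i j.
  move=> lam i.
  rewrite !mulmxDr mulmx_sumr -scalemxAr.
  under eq_bigr do rewrite -scalemxAr.
  rewrite !entD entZ summxE.
  under eq_bigr do rewrite entZ colV.
  rewrite [in RHS](bigD1 j1) //= /dL eqxx /K entD colV.
  under [X in _ = _ + (_ + X)]eq_bigr => j /negbTE -> do [].
  ring.
have cR : forall (lam : 'cV[R]_nin) i,
  (W *m (c + r *: u1 + (lam j1 0 * (1 - r)) *: u1
     + \sum_(j < nin | j != j1) lam j 0 *: col j U) + b) i 0
  = (K i + r * V i j1) + \sum_j lam j 0 * dR i j.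
  move=> lam i.
  rewrite !mulmxDr mulmx_sumr -!scalemxAr.
  under eq_bigr do rewrite -scalemxAr.
  rewrite !entD !entZ summxE.
  under eq_bigr do rewrite entZ colV.
  rewrite [in RHS](bigD1 j1) //= /dR eqxx /K entD colV.
  under [X in _ = _ + (_ + X)]eq_bigr => j /negbTE -> do [].
  ring.
pose cb := [set lam : 'cV[R]_nin | forall j, 0 <= lam j 0 <= 1].
have XV : forall i, [set y i 0 | y in PV] = [set K i + \sum_j lam j 0 * V i j | lam in cb].
  move=> i; apply/funext => t; apply/propext; rewrite /PV /affine_image /PU /parallelotope; split.
  - by case=> y [x [lam hl <-] <-] <-; exists lam => //; rewrite cV.
  - case=> lam hl <-; exists (W *m (c + U *m lam) + b); last by rewrite cV.
    by exists (c + U *m lam) => //; exists lam.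
have XL : forall i, [set y i 0 | y in PVL] = [set K i + \sum_j lam j 0 * dL i j | lam in cb].
  move=> i; apply/funext => t; apply/propext; rewrite /PVL /affine_image /PUL; split.
  - by case=> y [x [lam hl <-] <-] <-; exists lam => //; rewrite cL.
  - case=> lam hl <-.
    exists (W *m (c + (lam j1 0 * r) *: u1 + \sum_(j < nin | j != j1) lam j 0 *: col j U) + b); last by rewrite cL.
    by eexists => //; exists lam.
have XR : forall i, [set y i 0 | y in PVR] =
    [set (K i + r * V i j1) + \sum_j lam j 0 * dR i j | lam in cb].
  move=> i; apply/funext => t; apply/propext; rewrite /PVR /affine_image /PUR; split.
  - by case=> y [x [lam hl <-] <-] <-; exists lam => //; rewrite cR.
  - case=> lam hl <-.
    exists (W *m (c + r *: u1 + (lam j1 0 * (1 - r)) *: u1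
     + \sum_(j < nin | j != j1) lam j 0 *: col j U) + b); last by rewrite cR.
    by eexists => //; exists lam.
pose loV i := K i + \sum_j Num.min 0 (V i j).
pose hiV i := K i + \sum_j Num.max 0 (V i j).
pose loL i := K i + \sum_j Num.min 0 (dL i j).
pose hiL i := K i + \sum_j Num.max 0 (dL i j).
pose loR i := (K i + r * V i j1) + \sum_j Num.min 0 (dR i j).
pose hiR i := (K i + r * V i j1) + \sum_j Num.max 0 (dR i j).
have bV : bbox PV = [set y | inbox loV hiV y].
  apply/funext => y; apply/propext; split => H i; have := H i;
    by rewrite XV cube_inf cube_sup.
have bL : bbox PVL = [set y | inbox loL hiL y].
  apply/funext => y; apply/propext; split => H i; have := H i;
    by rewrite XL cube_inf cube_sup.
have bR : bbox PVR = [set y | inbox loR hiR y].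
  apply/funext => y; apply/propext; split => H i; have := H i;
    by rewrite XR cube_inf cube_sup.
rewrite bV bL bR vol_box vol_box2.
have -> : forall x y : R, (x%:E - y%:E)%E = (x - y)%:E by move=> x y; rewrite EFinB.
congr (_%:E).
have dLs : forall i (f : R -> R),
    \sum_(j < nin | j != j1) f (dL i j) = \sum_(j < nin | j != j1) f (V i j).
  by move=> i f; apply: eq_bigr => j /negbTE hj; rewrite /dL hj.
have dRs : forall i (f : R -> R),
    \sum_(j < nin | j != j1) f (dR i j) = \sum_(j < nin | j != j1) f (V i j).
  by move=> i f; apply: eq_bigr => j /negbTE hj; rewrite /dR hj.
have pV : pw loV hiV = \prod_i (`|V i j1| + z i).
  by apply: eq_bigr => i _; rewrite /loV /hiV wlem (bigD1 j1).
have pL : pw loL hiL = \prod_i (r * `|V i j1| + z i).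
  apply: eq_bigr => i _; rewrite /loL /hiL wlem (bigD1 j1) //= /dL eqxx.
  rewrite (dLs i (fun x => `|x|)) normrM (ger0_norm hr0) //.
have pR : pw loR hiR = \prod_i ((1 - r) * `|V i j1| + z i).
  apply: eq_bigr => i _; rewrite /loR /hiR wlem (bigD1 j1) //= /dR eqxx.
  rewrite (dRs i (fun x => `|x|)) normrM (ger0_norm (_ : 0 <= 1 - r)) //.
  by rewrite subr_ge0.
have p12 : pw (mx2 loL loR) (mn2 hiL hiR) = \prod_i z i.
  apply: eq_bigr => i _; rewrite /mx2 /mn2.
  have -> : hiL i = K i + (Num.max 0 (r * V i j1) + \sum_(j < nin | j != j1) Num.max 0 (V i j)).
    by rewrite /hiL (bigD1 j1) //= /dL eqxx (dLs i (Num.max 0)).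
  have -> : loL i = K i + (Num.min 0 (r * V i j1) + \sum_(j < nin | j != j1) Num.min 0 (V i j)).
    by rewrite /loL (bigD1 j1) //= /dL eqxx (dLs i (Num.min 0)).
  have -> : hiR i = K i + r * V i j1 + (Num.max 0 ((1 - r) * V i j1)
      + \sum_(j < nin | j != j1) Num.max 0 (V i j)).
    by rewrite /hiR (bigD1 j1) //= /dR eqxx (dRs i (Num.max 0)).
  have -> : loR i = K i + r * V i j1 + (Num.min 0 ((1 - r) * V i j1)
      + \sum_(j < nin | j != j1) Num.min 0 (V i j)).
    by rewrite /loR (bigD1 j1) //= /dR eqxx (dRs i (Num.min 0)).
  rewrite overlap //; last first.
    by apply: ler_sum => j _; case: (leP 0 (V i j)) => h //; apply: ltW.
  by rewrite -sumrB; apply: eq_bigr => j _; rewrite maxmin.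
rewrite pV pL pR p12.
have := @final R nout hout (fun i => `|V i j1|) z r.
rewrite /Sk /= => ->.
by [].
Qed.
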